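(* Fix a program in the first-order functional language described in the context, and a program point $\pi$ of an expression in it. Then $$\{\,s\in\{0,1\}^*\mid \mathcal S(L(M_\pi^{\{s\}}))\neq\emptyset\,\}\;=\;L(A^{\mathrm{comp}}_\pi)\,(0+1)^*.$$ Here $M_\pi^{\{s\}}$ is the Mohri–Nederhof regular approximation of the demand grammar $G_\pi^{\{s\}}$, $\mathcal S$ is the simplification function, and $A^{\mathrm{comp}}_\pi$ is the completing automaton of $\pi$.
   Context: Programs. A program consists of first-order function definitions $(\mathtt{define}\ (f\ z_1\ \dots\ z_n)\ e_f)$ and a main expression $e_{\mathrm{main}}$, which is treated as the body of a parameterless function $\mathrm{main}$. Programs are in administrative normal form and all variable names are distinct. The grammar is $e ::= (\mathtt{if}\ x\ e_1\ e_2) \mid (\mathtt{let}\ x \leftarrow s\ \mathtt{in}\ e) \mid (\mathtt{return}\ x)$, $s ::= k \mid \mathtt{nil} \mid (\mathtt{cons}\ x_1\ x_2) \mid (\mathtt{car}\ x) \mid (\mathtt{cdr}\ x) \mid (\mathtt{null?}\ x) \mid (+\ x_1\ x_2) \mid (f\ x_1 \dots x_n)$. Every expression, every application and every variable occurrence carries a distinct label $\pi$. Demands. Let $\Sigma=\{0,1,\bar0,\bar1,2\}$. A demand is a set of strings over $\Sigma$. For sets we write $\sigma_1\sigma_2=\{\alpha\beta\mid\alpha\in\sigma_1,\beta\in\sigma_2\}$ and $a\sigma=\{a\alpha\mid\alpha\in\sigma\}$. Demand analysis. Maps from program points to demands are combined by pointwise union. For applications, $\mathcal A(s,\sigma)$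 is: - for a constant or $\mathtt{nil}$: $\{\pi\mapsto\sigma\}$; - for $(\mathtt{null?}\ \pi_1{:}x)$: $\{\pi_1\mapsto2\sigma,\pi\mapsto\sigma\}$; - for $(+\ \pi_1{:}x\ \pi_2{:}y)$: $\{\pi_1\mapsto2\sigma,\pi_2\mapsto2\sigma,\pi\mapsto\sigma\}$; - for $(\mathtt{car}\ \pi_1{:}x)$: $\{\pi_1\mapsto2\sigma\cup0\sigma,\pi\mapsto\sigma\}$; - for $(\mathtt{cdr}\ \pi_1{:}x)$: $\{\pi_1\mapsto2\sigma\cup1\sigma,\pi\mapsto\sigma\}$; - for $(\mathtt{cons}\ \pi_1{:}x\ \pi_2{:}y)$: $\{\pi_1\mapsto\bar0\sigma,\pi_2\mapsto\bar1\sigma,\pi\mapsto\sigma\}$; - for $(f\ \pi_1{:}y_1\dots\pi_n{:}y_n)$: $\{\pi_i\mapsto L_f^i\sigma,\pi\mapsto\sigma\}$. For expressions, $\mathcal D$ is: - $\mathcal D(\pi{:}(\mathtt{return}\ \pi_1{:}x),\sigma)=\{\pi_1\mapsto\sigma,\pi\mapsto\sigma\}$; - $\mathcal D(\pi{:}(\mathtt{if}\ \pi_1{:}x\ e_1\ e_2),\sigma)=\mathcal D(e_1,\sigma)\cup\mathcal D(e_2,\sigma)\cup\{\pi_1\mapsto2\sigma,\pi\mapsto\sigma\}$; - $\mathcal D(\pi{:}(\mathtt{let}\ x\leftarrow s\ \mathtt{in}\ e),\sigma)=\mathcal A(s,\bigcup_{\pi'}DE(\pi'))\cup DE\cup\{\pi\mapsto\sigma\}$,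 where $DE=\mathcal D(e,\sigma)$ and $\pi'$ ranges over the occurrences of $x$ in $e$. Summaries and concrete demands. $L_f^i\subseteq\Sigma^*$ satisfies $L_f^i\sigma=\bigcup_{\pi'}\mathcal D(e_f,\sigma)(\pi')$ over occurrences $\pi'$ of the $i$-th parameter in $e_f$, for symbolic $\sigma$. The concrete demands are $\sigma_{\mathrm{main}}=$ the given set $\sigma$ of strings over $\{0,1\}$ (the slicing criterion), and $\sigma_f=$ the union of the demands on all call sites of $f$. The demand at $\pi$ in the body of $f$ is $D_\pi=\mathcal D(e_f,\sigma_f)(\pi)$. These equations form a context-free grammar over $\Sigma$ (least solution); $G_\pi^\sigma$ is this grammar with start symbol $D_\pi$. Mohri–Nederhof approximation. Consider each strongly connected component $N'$ of mutually recursive nonterminals whose productions are neither all right-linear nor all left-linear with respect to $N'$. For such a component, add a fresh nonterminal $A'$ for each $A\in N'$. Replace every production $A\to\alpha_0B_1\alpha_1\cdots B_m\alpha_m$ (with $A,B_j\in N'$, the $\alpha_j$ free of $N'$-nonterminals, $m\ge0$) by $A\to\alpha_0B_1,\ B_1'\to\alpha_1B_2,\dots,B_m'\to\alpha_mA'$ (for $m=0$: $A\to\alpha_0A'$), and add $A'\to\epsilon$ for each $A\in N'$. $M_\pi^\sigma$ is the resulting regular grammar/automaton obtained from $G_\pi^\sigma$, with language $L(M_\pi^\sigma)$. Simplification $\mathcal S$ (defined string-wise from the right and extended to sets by union): - $\mathcal S(\epsilon)=\{\epsilon\}$; - $\mathcal S(0w)=0\mathcal S(w)$ and $\mathcal S(1w)=1\mathcal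 S(w)$; - $\mathcal S(\bar0w)=\{\alpha\mid0\alpha\in\mathcal S(w)\}$ and $\mathcal S(\bar1w)=\{\alpha\mid1\alpha\in\mathcal S(w)\}$; - $\mathcal S(2w)=\emptyset$ if $\mathcal S(w)=\emptyset$, and $\{\epsilon\}$ otherwise. Canonicalization $\mathcal C$ (also string-wise from the right, extended by union): - $\mathcal C(\epsilon)=\{\epsilon\}$; - $\mathcal C(0w)=0\mathcal C(w)$, $\mathcal C(1w)=1\mathcal C(w)$, $\mathcal C(2w)=2\mathcal C(w)$; - $\mathcal C(\bar0w)=\{\bar0\mid\mathcal C(w)=\{\epsilon\}\}\cup\{\alpha\mid0\alpha\in\mathcal C(w)\}\cup\{\bar0\bar1\alpha\mid\bar1\alpha\in\mathcal C(w)\}\cup\{\bar0\bar0\alpha\mid\bar0\alpha\in\mathcal C(w)\}$; - $\mathcal C(\bar1w)=\{\bar1\mid\mathcal C(w)=\{\epsilon\}\}\cup\{\alpha\mid1\alpha\in\mathcal C(w)\}\cup\{\bar1\bar1\alpha\mid\bar1\alpha\in\mathcal C(w)\}\cup\{\bar1\bar0\alpha\mid\bar0\alpha\in\mathcal C(w)\}$. $A_\pi$ is an automaton accepting $\mathcal C(L(M_\pi^{\{\epsilon\}}))$. For $p\in\{\bar0,\bar1\}^*$, let $\overline{p}$ be the reverse of $p$ with $\bar0$ replaced by $0$ and $\bar1$ by $1$. The completing automaton $A^{\mathrm{comp}}_\pi$ is constructed from $A_\pi$ as follows: - take as final states the states reachable from the start state using only transitions labelled $0,1,2$; - reverse every $\bar0$-transition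 into a $0$-transition and every $\bar1$-transition into a $1$-transition, dropping all other transitions; - add a new start state with $\epsilon$-transitions to the old final states. Its language is $L(A^{\mathrm{comp}}_\pi)=\{\overline{p}\mid p\in\{\bar0,\bar1\}^*,\ \exists u\in\{0,1,2\}^*:\ up\in L(A_\pi)\}$. *)

(* Defs.v *)
From Stdlib Require Import List Relations Arith.
Import ListNotations.

(* ---------- Alphabet Sigma = {0,1,0bar,1bar,2} ---------- *)
Inductive Sig : Type := S0 | S1 | B0 | B1 | S2.

(* {0,1}-strings are lists of booleans: false = 0, true = 1 *)
Definition emb (b : bool) : Sig := if b then S1 else S0.

Definition label := nat.
Definition var := nat.
Definition fname := nat.

(* an application s; its own label is stored in the enclosing let *)
Inductive app : Type :=
| AConst (k : nat)
| ANil
| ACons (l1 : label) (x1 : var) (l2 : label) (x2 : var)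
| ACar (l1 : label) (x : var)
| ACdr (l1 : label) (x : var)
| ANull (l1 : label) (x : var)
| APlus (l1 : label) (x1 : var) (l2 : label) (x2 : var)
| ACall (f : fname) (args : list (label * var)).

(* EIf l l1 x e1 e2   = l:(if l1:x e1 e2)
   ELet l x ls s e    = l:(let x <- ls:s in e)
   EReturn l l1 x     = l:(return l1:x) *)
Inductive expr : Type :=
| EIf (l : label) (l1 : label) (x : var) (e1 e2 : expr)
| ELet (l : label) (x : var) (ls : label) (s : app) (e : expr)
| EReturn (l : label) (l1 : label) (x : var).

Record fundef : Type := { fd_name : fname; fd_params : list var; fd_body : expr }.
Record program : Type := { defs : list fundef; main : expr }.

Definition occ1 (x : var) (l : label) (y : var) : list label :=
  if Nat.eqb y x then [l] else [].

Definition app_occs (x : var) (s : app) : list label :=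
  match s with
  | ACons l1 x1 l2 x2 | APlus l1 x1 l2 x2 => occ1 x l1 x1 ++ occ1 x l2 x2
  | ACar l1 y | ACdr l1 y | ANull l1 y => occ1 x l1 y
  | ACall _ args => concat (map (fun p => occ1 x (fst p) (snd p)) args)
  | AConst _ | ANil => []
  end.

Fixpoint occs (x : var) (e : expr) : list label :=
  match e with
  | EIf _ l1 y e1 e2 => occ1 x l1 y ++ occs x e1 ++ occs x e2
  | ELet _ _ _ s e' => app_occs x s ++ occs x e'
  | EReturn _ l1 y => occ1 x l1 y
  end.

Inductive gsym (V : Type) : Type := Tm (a : Sig) | Nt (v : V).
Arguments Tm {V} a.
Arguments Nt {V} v.

Inductive derives {V : Type} (P : V -> list (gsym V) -> Prop) :
  list (gsym V) -> list Sig -> Prop :=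
| der_nil : derives P [] []
| der_tm a r w : derives P r w -> derives P (Tm a :: r) (a :: w)
| der_nt A rhs r w1 w2 :
    P A rhs -> derives P rhs w1 -> derives P r w2 ->
    derives P (Nt A :: r) (w1 ++ w2).

Definition lang {V : Type} (P : V -> list (gsym V) -> Prop) (A : V) (w : list Sig) : Prop :=
  derives P [Nt A] w.

(* Dc l : concrete demand D_l ; Ds l : symbolic demand (sigma := {eps}) at l
   inside a function body, used for the summaries; Lf f i : L_f^i (1-based);
   Sg (Some f) : sigma_f ; Sg None : sigma_main *)
Inductive nt : Type :=
| Dc (l : label) | Ds (l : label) | Lf (f : fname) (i : nat) | Sg (g : option fname).

Definition prod := (nt * list (gsym nt))%type.

Fixpoint call_prods (mk : label -> nt) (ls : label) (f : fname) (i : nat)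
  (args : list (label * var)) : list prod :=
  match args with
  | [] => []
  | (li, _) :: r => (mk li, [Nt (Lf f i); Nt (mk ls)]) :: call_prods mk ls f (S i) r
  end.

(* A(s, sigma') where sigma' is the nonterminal mk ls (demand at the application) *)
Definition app_prods (mk : label -> nt) (ls : label) (s : app) : list prod :=
  match s with
  | AConst _ | ANil => []
  | ANull l1 _ => [(mk l1, [Tm S2; Nt (mk ls)])]
  | APlus l1 _ l2 _ => [(mk l1, [Tm S2; Nt (mk ls)]); (mk l2, [Tm S2; Nt (mk ls)])]
  | ACar l1 _ => [(mk l1, [Tm S2; Nt (mk ls)]); (mk l1, [Tm S0; Nt (mk ls)])]
  | ACdr l1 _ => [(mk l1, [Tm S2; Nt (mk ls)]); (mk l1, [Tm S1; Nt (mk ls)])]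
  | ACons l1 _ l2 _ => [(mk l1, [Tm B0; Nt (mk ls)]); (mk l2, [Tm B1; Nt (mk ls)])]
  | ACall f args => call_prods mk ls f 1 args
  end.

(* D(e, sigma) where sigma is the symbol string tl *)
Fixpoint expr_prods (mk : label -> nt) (tl : list (gsym nt)) (e : expr) : list prod :=
  match e with
  | EReturn l l1 _ => [(mk l, tl); (mk l1, tl)]
  | EIf l l1 _ e1 e2 =>
      (mk l, tl) :: (mk l1, Tm S2 :: tl) :: expr_prods mk tl e1 ++ expr_prods mk tl e2
  | ELet l x ls s e' =>
      (mk l, tl) :: map (fun p => (mk ls, [Nt (mk p)])) (occs x e')
        ++ app_prods mk ls s ++ expr_prods mk tl e'
  end.

Fixpoint param_prods (f : fname) (body : expr) (i : nat) (ps : list var) : list prod :=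
  match ps with
  | [] => []
  | z :: r => map (fun p => (Lf f i, [Nt (Ds p)])) (occs z body) ++ param_prods f body (S i) r
  end.

(* call sites: (callee, label of the application, number of arguments) *)
Definition app_calls (ls : label) (s : app) : list (fname * label * nat) :=
  match s with
  | ACall f args => [(f, ls, length args)]
  | _ => []
  end.

Fixpoint calls (e : expr) : list (fname * label * nat) :=
  match e with
  | EIf _ _ _ e1 e2 => calls e1 ++ calls e2
  | ELet _ _ ls s e' => app_calls ls s ++ calls e'
  | EReturn _ _ _ => []
  end.

Definition all_calls (p : program) : list (fname * label * nat) :=
  concat (map (fun d => calls (fd_body d)) (defs p)) ++ calls (main p).

Definition grammar (p : program) (sigma : list (list Sig)) : list prod :=
  concat (map (fun d =>
      expr_prods Dc [Nt (Sg (Some (fd_name d)))] (fd_body d)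
      ++ expr_prods Ds [] (fd_body d)
      ++ param_prods (fd_name d) (fd_body d) 1 (fd_params d)) (defs p))
  ++ expr_prods Dc [Nt (Sg None)] (main p)
  ++ map (fun c => (Sg (Some (fst (fst c))), [Nt (Dc (snd (fst c)))])) (all_calls p)
  ++ map (fun s => (Sg None, map Tm s)) sigma.

Definition G (p : program) (sigma : list (list Sig)) (A : nt) (rhs : list (gsym nt)) : Prop :=
  In (A, rhs) (grammar p sigma).

Definition edge {V : Type} (P : V -> list (gsym V) -> Prop) (A B : V) : Prop :=
  exists r, P A r /\ In (Nt B) r.

Definition reach {V : Type} (P : V -> list (gsym V) -> Prop) : relation V :=
  clos_refl_trans V (edge P).

Definition scc {V : Type} (P : V -> list (gsym V) -> Prop) (A B : V) : Prop :=
  reach P A B /\ reach P B A.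

Definition rightlin {V : Type} (C : V -> Prop) (r : list (gsym V)) : Prop :=
  forall a B b, r = a ++ Nt B :: b -> C B -> b = [].
Definition leftlin {V : Type} (C : V -> Prop) (r : list (gsym V)) : Prop :=
  forall a B b, r = a ++ Nt B :: b -> C B -> a = [].

Definition nonlinear_comp {V : Type} (P : V -> list (gsym V) -> Prop) (A : V) : Prop :=
  ~ (forall X r, scc P A X -> P X r -> rightlin (scc P A) r) /\
  ~ (forall X r, scc P A X -> P X r -> leftlin (scc P A) r).

Definition noC {V : Type} (C : V -> Prop) (a : list (gsym V)) : Prop :=
  forall B, In (Nt B) a -> ~ C B.

Definition decomp {V : Type} (C : V -> Prop) (r : list (gsym V))
  (a0 : list (gsym V)) (bs : list (V * list (gsym V))) : Prop :=
  r = a0 ++ concat (map (fun q => Nt (fst q) :: snd q) bs) /\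
  noC C a0 /\ Forall (fun q => C (fst q) /\ noC C (snd q)) bs.

(* nonterminal (A,false) is A, (A,true) is the fresh A' *)
Definition lift {V : Type} (r : list (gsym V)) : list (gsym (V * bool)) :=
  map (fun s => match s with Tm a => Tm a | Nt v => Nt (v, false) end) r.

Fixpoint mn_chain {V : Type} (src : V * bool) (body : list (gsym V))
  (bs : list (V * list (gsym V))) (A : V) : list ((V * bool) * list (gsym (V * bool))) :=
  match bs with
  | [] => [(src, lift body ++ [Nt (A, true)])]
  | (B, al) :: bs' => (src, lift body ++ [Nt (B, false)]) :: mn_chain (B, true) al bs' A
  end.

Definition mn {V : Type} (P : V -> list (gsym V) -> Prop)
  (X : V * bool) (rhs : list (gsym (V * bool))) : Prop :=
  (snd X = false /\ ~ nonlinear_comp P (fst X) /\ exists r, P (fst X) r /\ rhs = lift r)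
  \/ (exists A r a0 bs, nonlinear_comp P A /\ P A r /\ decomp (scc P A) r a0 bs /\
        In (X, rhs) (mn_chain (A, false) a0 bs A))
  \/ (snd X = true /\ nonlinear_comp P (fst X) /\ rhs = []).

Definition LM (p : program) (sigma : list (list Sig)) (pi : label) (w : list Sig) : Prop :=
  lang (mn (G p sigma)) (Dc pi, false) w.

Fixpoint simp (w : list Sig) : list Sig -> Prop :=
  match w with
  | [] => fun a => a = []
  | S0 :: w' => fun a => exists b, a = S0 :: b /\ simp w' b
  | S1 :: w' => fun a => exists b, a = S1 :: b /\ simp w' b
  | B0 :: w' => fun a => simp w' (S0 :: a)
  | B1 :: w' => fun a => simp w' (S1 :: a)
  | S2 :: w' => fun a => a = [] /\ exists b, simp w' b
  end.

Definition simpL (L : list Sig -> Prop) (a : list Sig) : Prop :=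
  exists w, L w /\ simp w a.

Fixpoint canon (w : list Sig) : list Sig -> Prop :=
  match w with
  | [] => fun a => a = []
  | S0 :: w' => fun a => exists b, a = S0 :: b /\ canon w' b
  | S1 :: w' => fun a => exists b, a = S1 :: b /\ canon w' b
  | S2 :: w' => fun a => exists b, a = S2 :: b /\ canon w' b
  | B0 :: w' => fun a =>
      ((forall b, canon w' b <-> b = []) /\ a = [B0])
      \/ canon w' (S0 :: a)
      \/ (exists al, a = B0 :: B1 :: al /\ canon w' (B1 :: al))
      \/ (exists al, a = B0 :: B0 :: al /\ canon w' (B0 :: al))
  | B1 :: w' => fun a =>
      ((forall b, canon w' b <-> b = []) /\ a = [B1])
      \/ canon w' (S1 :: a)
      \/ (exists al, a = B1 :: B1 :: al /\ canon w' (B1 :: al))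
      \/ (exists al, a = B1 :: B0 :: al /\ canon w' (B0 :: al))
  end.

Definition LA (p : program) (pi : label) (a : list Sig) : Prop :=
  exists w, LM p [[]] pi w /\ canon w a.

Definition unbar (x : Sig) : Sig := match x with B0 => S0 | B1 => S1 | y => y end.
Definition overline (p : list Sig) : list Sig := rev (map unbar p).
Definition isbar (x : Sig) : Prop := x = B0 \/ x = B1.
Definition isplain (x : Sig) : Prop := x = S0 \/ x = S1 \/ x = S2.

Definition Lcomp (p : program) (pi : label) (t : list bool) : Prop :=
  exists q u, Forall isbar q /\ Forall isplain u /\ LA p pi (u ++ q) /\
              map emb t = overline q.

Definition app_labels (s : app) : list label :=
  match s with
  | ACons l1 _ l2 _ | APlus l1 _ l2 _ => [l1; l2]
  | ACar l1 _ | ACdr l1 _ | ANull l1 _ => [l1]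
  | ACall _ args => map fst args
  | AConst _ | ANil => []
  end.

Fixpoint expr_labels (e : expr) : list label :=
  match e with
  | EIf l l1 _ e1 e2 => l :: l1 :: expr_labels e1 ++ expr_labels e2
  | ELet l _ ls s e' => l :: ls :: app_labels s ++ expr_labels e'
  | EReturn l l1 _ => [l; l1]
  end.

Definition prog_labels (p : program) : list label :=
  concat (map (fun d => expr_labels (fd_body d)) (defs p)) ++ expr_labels (main p).

Fixpoint binders (e : expr) : list var :=
  match e with
  | EIf _ _ _ e1 e2 => binders e1 ++ binders e2
  | ELet _ x _ _ e' => x :: binders e'
  | EReturn _ _ _ => []
  end.

Definition prog_vars (p : program) : list var :=
  concat (map (fun d => fd_params d ++ binders (fd_body d)) (defs p)) ++ binders (main p).

Definition app_vars (s : app) : list var :=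
  match s with
  | ACons _ x1 _ x2 | APlus _ x1 _ x2 => [x1; x2]
  | ACar _ x | ACdr _ x | ANull _ x => [x]
  | ACall _ args => map snd args
  | AConst _ | ANil => []
  end.

Fixpoint scoped (env : list var) (e : expr) : Prop :=
  match e with
  | EIf _ _ x e1 e2 => In x env /\ scoped env e1 /\ scoped env e2
  | ELet _ x _ s e' => (forall y, In y (app_vars s) -> In y env) /\ scoped (x :: env) e'
  | EReturn _ _ x => In x env
  end.

Definition wf_program (p : program) : Prop :=
  NoDup (prog_labels p) /\
  NoDup (prog_vars p) /\
  NoDup (map fd_name (defs p)) /\
  (forall d, In d (defs p) -> scoped (fd_params d) (fd_body d)) /\
  scoped [] (main p) /\
  (forall f l n, In (f, l, n) (all_calls p) ->
     exists d, In d (defs p) /\ fd_name d = f /\ length (fd_params d) = n).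

(* Main.v *)
Require Import Defs.
From Stdlib Require Import List Classical FunctionalExtensionality PropExtensionality.
Import ListNotations.

Lemma canon_det : forall w a b, canon w a -> canon w b -> a = b.
Proof.
  induction w as [|x w IH]; simpl; intros a b Ha Hb.
  - congruence.
  - destruct x; simpl in *.
    + destruct Ha as [a' [-> Ha]]; destruct Hb as [b' [-> Hb]]; f_equal; eauto.
    + destruct Ha as [a' [-> Ha]]; destruct Hb as [b' [-> Hb]]; f_equal; eauto.
    + destruct Ha as [[Ha ->]|[Ha|[[al [-> Ha]]|[al [-> Ha]]]]];
      destruct Hb as [[Hb ->]|[Hb|[[bl [-> Hb]]|[bl [-> Hb]]]]];
      try reflexivity;
      try (apply Ha in Hb; discriminate);
      try (apply Hb in Ha; discriminate);
      try (specialize (IH _ _ Ha Hb); congruence).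
    + destruct Ha as [[Ha ->]|[Ha|[[al [-> Ha]]|[al [-> Ha]]]]];
      destruct Hb as [[Hb ->]|[Hb|[[bl [-> Hb]]|[bl [-> Hb]]]]];
      try reflexivity;
      try (apply Ha in Hb; discriminate);
      try (apply Hb in Ha; discriminate);
      try (specialize (IH _ _ Ha Hb); congruence).
    + destruct Ha as [a' [-> Ha]]; destruct Hb as [b' [-> Hb]]; f_equal; eauto.
Qed.

Lemma canon_form : forall w c, canon w c ->
  exists u q, c = u ++ q /\ Forall isplain u /\ Forall isbar q.
Proof.
  induction w as [|x w IH]; simpl; intros c Hc.
  - subst. exists [], []. repeat split; constructor.
  - destruct x; simpl in *.
    + destruct Hc as [b [-> Hb]]. destruct (IH _ Hb) as [u [q [-> [Hu Hq]]]].
      exists (S0 :: u), q. repeat split; auto. constructor; auto. left; auto.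
    + destruct Hc as [b [-> Hb]]. destruct (IH _ Hb) as [u [q [-> [Hu Hq]]]].
      exists (S1 :: u), q. repeat split; auto. constructor; auto. right; left; auto.
    + destruct Hc as [[_ ->]|[Hc|[[al [-> Hc]]|[al [-> Hc]]]]].
      * exists [], [B0]. repeat split; auto. constructor; [left; auto| constructor].
      * destruct (IH _ Hc) as [u [q [E [Hu Hq]]]].
        destruct u as [|y u]; simpl in E.
        -- subst q. inversion Hq; subst. destruct H1; discriminate.
        -- injection E as E1 E2; subst. exists u, q. inversion Hu; auto.
      * destruct (IH _ Hc) as [u [q [E [Hu Hq]]]].
        destruct u as [|y u]; simpl in E.
        -- subst q. exists [], (B0 :: B1 :: al). repeat split; auto. constructor; auto. left; auto.
        -- injection E as E1 E2; subst. inversion Hu; subst. destruct H1 as [H|[H|H]]; discriminate.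
      * destruct (IH _ Hc) as [u [q [E [Hu Hq]]]].
        destruct u as [|y u]; simpl in E.
        -- subst q. exists [], (B0 :: B0 :: al). repeat split; auto. constructor; auto. left; auto.
        -- injection E as E1 E2; subst. inversion Hu; subst. destruct H1 as [H|[H|H]]; discriminate.
    + destruct Hc as [[_ ->]|[Hc|[[al [-> Hc]]|[al [-> Hc]]]]].
      * exists [], [B1]. repeat split; auto. constructor; [right; auto| constructor].
      * destruct (IH _ Hc) as [u [q [E [Hu Hq]]]].
        destruct u as [|y u]; simpl in E.
        -- subst q. inversion Hq; subst. destruct H1; discriminate.
        -- injection E as E1 E2; subst. exists u, q. inversion Hu; auto.
      * destruct (IH _ Hc) as [u [q [E [Hu Hq]]]].
        destruct u as [|y u]; simpl in E.
        -- subst q. exists [], (B1 :: B1 :: al). repeat split; auto. constructor; auto. right; auto.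
        -- injection E as E1 E2; subst. inversion Hu; subst. destruct H1 as [H|[H|H]]; discriminate.
      * destruct (IH _ Hc) as [u [q [E [Hu Hq]]]].
        destruct u as [|y u]; simpl in E.
        -- subst q. exists [], (B1 :: B0 :: al). repeat split; auto. constructor; auto. right; auto.
        -- injection E as E1 E2; subst. inversion Hu; subst. destruct H1 as [H|[H|H]]; discriminate.
    + destruct Hc as [b [-> Hb]]. destruct (IH _ Hb) as [u [q [-> [Hu Hq]]]].
      exists (S2 :: u), q. repeat split; auto. constructor; auto. right; right; auto.
Qed.

Lemma simp_canon : forall w x a,
  simp (w ++ x) a <-> exists c, canon w c /\ simp (c ++ x) a.
Proof.
  induction w as [|y w IH]; intros x a.
  - simpl. split; [intros H; exists []; auto | intros [c [-> H]]; auto].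
  - destruct y; simpl.
    + split.
      * intros [b [-> Hb]]. apply IH in Hb. destruct Hb as [c [Hc Hs]].
        exists (S0 :: c). split; [exists c; auto|]. simpl. exists b; auto.
      * intros [c [[b [-> Hb]] Hs]]. simpl in Hs. destruct Hs as [b' [-> Hs]].
        exists b'. split; auto. apply IH. exists b; auto.
    + split.
      * intros [b [-> Hb]]. apply IH in Hb. destruct Hb as [c [Hc Hs]].
        exists (S1 :: c). split; [exists c; auto|]. simpl. exists b; auto.
      * intros [c [[b [-> Hb]] Hs]]. simpl in Hs. destruct Hs as [b' [-> Hs]].
        exists b'. split; auto. apply IH. exists b; auto.
    + split.
      * intros H. apply IH in H. destruct H as [c [Hc Hs]].
        destruct c as [|z c].
        -- exists [B0]. split; [left; split; auto|]. intros b; split; [intros Hb; exact (canon_det _ _ _ Hb Hc)| intros ->; auto].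
           simpl. exact Hs.
        -- destruct z; simpl in Hs.
           ++ destruct Hs as [b [E Hs]]. injection E as <-. exists c. split; auto.
           ++ destruct Hs as [b [E Hs]]. discriminate.
           ++ exists (B0 :: B0 :: c). split; [right; right; right; exists c; auto|]. simpl. exact Hs.
           ++ exists (B0 :: B1 :: c). split; [right; right; left; exists c; auto|]. simpl. exact Hs.
           ++ destruct Hs as [E _]. discriminate.
      * intros [c [Hc Hs]]. apply IH.
        destruct Hc as [[Hc ->]|[Hc|[[al [-> Hc]]|[al [-> Hc]]]]].
        -- exists []. split; [apply Hc; auto|]. exact Hs.
        -- exists (S0 :: c). split; auto. simpl. exists a; auto.
        -- exists (B1 :: al). split; auto.
        -- exists (B0 :: al). split; auto.
    + split.
      * intros H. apply IH in H. destruct H as [c [Hc Hs]].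
        destruct c as [|z c].
        -- exists [B1]. split; [left; split; auto|]. intros b; split; [intros Hb; exact (canon_det _ _ _ Hb Hc)| intros ->; auto].
           simpl. exact Hs.
        -- destruct z; simpl in Hs.
           ++ destruct Hs as [b [E Hs]]. discriminate.
           ++ destruct Hs as [b [E Hs]]. injection E as <-. exists c. split; auto.
           ++ exists (B1 :: B0 :: c). split; [right; right; right; exists c; auto|]. simpl. exact Hs.
           ++ exists (B1 :: B1 :: c). split; [right; right; left; exists c; auto|]. simpl. exact Hs.
           ++ destruct Hs as [E _]. discriminate.
      * intros [c [Hc Hs]]. apply IH.
        destruct Hc as [[Hc ->]|[Hc|[[al [-> Hc]]|[al [-> Hc]]]]].
        -- exists []. split; [apply Hc; auto|]. exact Hs.
        -- exists (S1 :: c). split; auto. simpl. exists a; auto.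
        -- exists (B1 :: al). split; auto.
        -- exists (B0 :: al). split; auto.
    + split.
      * intros [-> [b Hb]]. apply IH in Hb. destruct Hb as [c [Hc Hs]].
        exists (S2 :: c). split; [exists c; auto|]. simpl. split; eauto.
      * intros [c [[b [-> Hb]] Hs]]. simpl in Hs. destruct Hs as [-> [b' Hs]].
        split; auto. exists b'. apply IH. exists b; auto.
Qed.

Lemma simp_plain : forall u y, Forall isplain u ->
  ((exists a, simp (u ++ y) a) <-> exists a, simp y a).
Proof.
  induction u as [|x u IH]; intros y Hu; simpl; [tauto|].
  inversion Hu; subst. rewrite <- (IH y H2).
  destruct H1 as [E|[E|E]]; subst x; simpl.
  - split.
    + intros H. destruct H as [a H]. destruct H as [b H]. destruct H as [_ Hb]. exists b. exact Hb.
    + intros H. destruct H as [b Hb]. exists (S0 :: b). exists b. split; auto.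
  - split.
    + intros H. destruct H as [a H]. destruct H as [b H]. destruct H as [_ Hb]. exists b. exact Hb.
    + intros H. destruct H as [b Hb]. exists (S1 :: b). exists b. split; auto.
  - split.
    + intros H. destruct H as [a H]. destruct H as [_ H]. exact H.
    + intros H. exists []. split; auto.
Qed.

Lemma simp_bars : forall q y a, Forall isbar q ->
  (simp (q ++ y) a <-> simp y (overline q ++ a)).
Proof.
  induction q as [|x q IH]; intros y a Hq; simpl; [tauto|].
  inversion Hq; subst. unfold overline in *. simpl.
  destruct H1 as [E|E]; subst x; simpl; rewrite <- app_assoc; simpl; apply IH; auto.
Qed.

Lemma simp_emb : forall s b, simp (map emb s) b <-> b = map emb s.
Proof.
  induction s as [|x s IH]; intros b; simpl; [tauto|].
  destruct x; simpl; split.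
  - intros [b' [-> H]]. apply IH in H. subst. auto.
  - intros ->. exists (map emb s). split; auto. apply IH; auto.
  - intros [b' [-> H]]. apply IH in H. subst. auto.
  - intros ->. exists (map emb s). split; auto. apply IH; auto.
Qed.

Lemma simp_bars_emb : forall q s, Forall isbar q ->
  ((exists a, simp (q ++ map emb s) a) <->
   exists t u, s = t ++ u /\ map emb t = overline q).
Proof.
  intros q s Hq. split.
  - intros [a Ha]. apply simp_bars in Ha; auto. apply simp_emb in Ha.
    set (n := length (overline q)).
    exists (firstn n s), (skipn n s). split; [symmetry; apply firstn_skipn|].
    rewrite <- firstn_map, <- Ha. unfold n. rewrite firstn_app, PeanoNat.Nat.sub_diag, firstn_all. simpl.
    apply app_nil_r.
  - intros [t [u [-> Ht]]]. exists (map emb u). apply simp_bars; auto. apply simp_emb.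
    rewrite map_app, Ht. reflexivity.
Qed.

Definition isc (v : nt) : bool := match v with Dc _ | Sg _ => true | _ => false end.
Definition ncg {V : Type} (c : V -> bool) (r : list (gsym V)) : Prop :=
  forall B, In (Nt B) r -> c B = false.
Definition ntfree {V : Type} (r : list (gsym V)) : Prop := forall B, ~ In (Nt B) r.
Definition SPg {V : Type} (c : V -> bool) (A : V) (r : list (gsym V)) : Prop :=
  if c A then exists al Y, r = al ++ [Nt Y] /\ ncg c al /\ c Y = true else ncg c r.
Definition PS (P : nt -> list (gsym nt) -> Prop) : Prop :=
  forall A r, P A r -> (A = Sg None /\ ntfree r) \/ (A <> Sg None /\ SPg isc A r).

Definition ncgb {V : Type} (c : V -> bool) (r : list (gsym V)) : bool :=
  forallb (fun s => match s with Tm _ => true | Nt B => negb (c B) end) r.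
Lemma ncgb_ok {V : Type} (c : V -> bool) r : ncgb c r = true -> ncg c r.
Proof.
  unfold ncgb, ncg. rewrite forallb_forall. intros H B HB. specialize (H _ HB).
  simpl in H. destruct (c B); auto; discriminate.
Qed.

Ltac fin_SP := split; [reflexivity| split; [apply ncgb_ok; reflexivity|reflexivity]].
Ltac solve_Q := split; [simpl; discriminate|]; unfold SPg; simpl;
  first [ apply ncgb_ok; reflexivity
        | exists []; eexists; fin_SP
        | eexists [_]; eexists; fin_SP ].

Lemma call_prods_form mk ls f : forall args i pr, In pr (call_prods mk ls f i args) ->
  exists li i', pr = (mk li, [Nt (Lf f i'); Nt (mk ls)]).
Proof.
  induction args as [|[li x] args IH]; simpl; intros i pr H; [contradiction|].
  destruct H as [<-|H]; eauto.
Qed.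

Lemma expr_prods_Q (Q : prod -> Prop) mk tl
  (h1 : forall l, Q (mk l, tl))
  (h2 : forall l, Q (mk l, Tm S2 :: tl))
  (h3 : forall l l', Q (mk l, [Nt (mk l')]))
  (h4 : forall l a l', Q (mk l, [Tm a; Nt (mk l')]))
  (h5 : forall l f i l', Q (mk l, [Nt (Lf f i); Nt (mk l')])) :
  forall e pr, In pr (expr_prods mk tl e) -> Q pr.
Proof.
  induction e as [l l1 x e1 IH1 e2 IH2|l x ls s e IH|l l1 x]; simpl; intros pr H.
  - destruct H as [<-|[<-|H]]; auto. apply in_app_or in H. destruct H; auto.
  - destruct H as [<-|H]; auto. apply in_app_or in H. destruct H as [H|H].
    + apply in_map_iff in H. destruct H as [q [<- _]]. auto.
    + apply in_app_or in H. destruct H as [H|H]; auto.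
      destruct s; simpl in H; repeat (destruct H as [<-|H]; auto); try contradiction.
      apply call_prods_form in H. destruct H as [li [i' ->]]. auto.
  - destruct H as [<-|[<-|[]]]; auto.
Qed.

Lemma param_prods_Q f body : forall ps i pr, In pr (param_prods f body i ps) ->
  fst pr <> Sg None /\ SPg isc (fst pr) (snd pr).
Proof.
  induction ps as [|z ps IH]; simpl; intros i pr H; [contradiction|].
  apply in_app_or in H. destruct H as [H|H]; eauto.
  apply in_map_iff in H. destruct H as [q [<- _]]. simpl. solve_Q.
Qed.

Lemma G0_SP p A r : G p [] A r -> A <> Sg None /\ SPg isc A r.
Proof.
  unfold G, grammar. intros H. repeat (apply in_app_or in H; destruct H as [H|H]).
  - apply in_concat in H. destruct H as [l [Hl H]]. apply in_map_iff in Hl.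
    destruct Hl as [d [<- _]].
    repeat (apply in_app_or in H; destruct H as [H|H]).
    + refine (expr_prods_Q (fun pr => fst pr <> Sg None /\ SPg isc (fst pr) (snd pr))
        _ _ _ _ _ _ _ _ _ H); intros; solve_Q.
    + refine (expr_prods_Q (fun pr => fst pr <> Sg None /\ SPg isc (fst pr) (snd pr))
        _ _ _ _ _ _ _ _ _ H); intros; solve_Q.
    + exact (param_prods_Q _ _ _ _ _ H).
  - refine (expr_prods_Q (fun pr => fst pr <> Sg None /\ SPg isc (fst pr) (snd pr))
        _ _ _ _ _ _ _ _ _ H); intros; solve_Q.
  - apply in_map_iff in H. destruct H as [c [E _]]. injection E as <- <-. solve_Q.
  - simpl in H. contradiction.
Qed.

Lemma G_split p sigma A r : G p sigma A r <->
  G p [] A r \/ (A = Sg None /\ exists s, In s sigma /\ r = map Tm s).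
Proof.
  unfold G, grammar. rewrite !in_app_iff. simpl. split.
  - intros [H|[H|[H|H]]]; auto.
    apply in_map_iff in H. destruct H as [s [E Hs]]. injection E as <- <-. eauto.
  - intros [[H|[H|[H|[]]]]|[-> [s [Hs ->]]]]; auto.
    right; right; right. apply in_map_iff. eauto.
Qed.

Lemma ntfree_map {V : Type} s : @ntfree V (map Tm s).
Proof. intros B H. apply in_map_iff in H. destruct H as [x [E _]]. discriminate. Qed.

Lemma G_PS p sigma : PS (G p sigma).
Proof.
  intros A r H. apply G_split in H. destruct H as [H|[-> [s [_ ->]]]].
  - right. apply (G0_SP p); auto.
  - left. split; auto. apply ntfree_map.
Qed.

Lemma G_agree p s1 s2 A r : A <> Sg None -> (G p s1 A r <-> G p s2 A r).
Proof.
  intros Hne. rewrite (G_split p s1 A r), (G_split p s2 A r). split; intros [H|[E _]]; auto; congruence.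
Qed.


Lemma reach_nc P : PS P -> forall X Y, reach P X Y -> isc X = false -> isc Y = false.
Proof.
  intros HP X Y H. induction H as [X Y [r [Hr Hin]]| |]; auto.
  intros Hx. destruct (HP _ _ Hr) as [[-> _]|[_ Hs]]; [discriminate|].
  unfold SPg in Hs. rewrite Hx in Hs. apply Hs; auto.
Qed.

Lemma last_nt (al a b : list (gsym nt)) Y B :
  al ++ [Nt Y] = a ++ Nt B :: b -> ncg isc al -> isc B = true -> b = [].
Proof.
  intros E Hn HB. destruct b as [|z b]; auto. exfalso.
  destruct (exists_last (l := z :: b)) as [b' [z' Eb]]; [discriminate|].
  rewrite Eb in E. rewrite app_comm_cons, app_assoc in E.
  apply app_inj_tail in E. destruct E as [E _]. subst al.
  rewrite Hn in HB; [discriminate|]. apply in_elt.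
Qed.

Lemma nl_nc P A : PS P -> nonlinear_comp P A -> isc A = false.
Proof.
  intros HP Hnl. destruct (isc A) eqn:EA; auto. exfalso.
  destruct Hnl as [H1 _]. apply H1. intros X r [HAX HXA] Hr a B b E [HAB HBA].
  assert (EX : isc X = true) by (destruct (isc X) eqn:EX; auto; rewrite (reach_nc P HP X A) in EA; auto).
  assert (EB : isc B = true) by (destruct (isc B) eqn:EB; auto; rewrite (reach_nc P HP B A) in EA; auto).
  destruct (HP _ _ Hr) as [[_ Hf]|[_ Hs]].
  - exfalso. apply (Hf B). rewrite E. apply in_elt.
  - unfold SPg in Hs. rewrite EX in Hs. destruct Hs as [al [Y [-> [Hn _]]]].
    eapply last_nt; eauto.
Qed.

Lemma edge_eq P1 P2 : PS P1 -> PS P2 -> (forall A r, A <> Sg None -> (P1 A r <-> P2 A r)) ->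
  edge P1 = edge P2.
Proof.
  intros H1 H2 Hag. apply functional_extensionality; intro A.
  apply functional_extensionality; intro B. apply propositional_extensionality.
  unfold edge. destruct (classic (A = Sg None)) as [->|Hne].
  - split; intros [r [Hr Hin]]; exfalso.
    + destruct (H1 _ _ Hr) as [[_ Hf]|[Hne _]]; [exact (Hf _ Hin)|congruence].
    + destruct (H2 _ _ Hr) as [[_ Hf]|[Hne _]]; [exact (Hf _ Hin)|congruence].
  - split; intros [r [Hr Hin]]; exists r; split; auto; apply Hag; auto.
Qed.

Lemma scc_eq P1 P2 : PS P1 -> PS P2 -> (forall A r, A <> Sg None -> (P1 A r <-> P2 A r)) ->
  scc P1 = scc P2.
Proof.
  intros H1 H2 Hag. unfold scc, reach. rewrite (edge_eq P1 P2 H1 H2 Hag). reflexivity.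
Qed.

Lemma prods_eq P1 P2 (S : nt -> Prop) (F : list (gsym nt) -> Prop) :
  PS P1 -> PS P2 -> (forall A r, A <> Sg None -> (P1 A r <-> P2 A r)) ->
  (forall r, ntfree r -> F r) ->
  ((forall X r, S X -> P1 X r -> F r) <-> (forall X r, S X -> P2 X r -> F r)).
Proof.
  intros H1 H2 Hag HF. split; intros H X r HS Hr; destruct (classic (X = Sg None)) as [->|Hne].
  - destruct (H2 _ _ Hr) as [[_ Hf]|[Hne _]]; [auto|congruence].
  - apply (H X r HS). apply Hag; auto.
  - destruct (H1 _ _ Hr) as [[_ Hf]|[Hne _]]; [auto|congruence].
  - apply (H X r HS). apply Hag; auto.
Qed.

Lemma nl_eq P1 P2 A : PS P1 -> PS P2 -> (forall A r, A <> Sg None -> (P1 A r <-> P2 A r)) ->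
  (nonlinear_comp P1 A <-> nonlinear_comp P2 A).
Proof.
  intros H1 H2 Hag. unfold nonlinear_comp. rewrite (scc_eq P1 P2 H1 H2 Hag).
  assert (HR : forall r, ntfree r -> rightlin (scc P2 A) r)
    by (intros r Hf a B b E; exfalso; apply (Hf B); rewrite E; apply in_elt).
  assert (HL : forall r, ntfree r -> leftlin (scc P2 A) r)
    by (intros r Hf a B b E; exfalso; apply (Hf B); rewrite E; apply in_elt).
  pose proof (prods_eq P1 P2 (scc P2 A) (rightlin (scc P2 A)) H1 H2 Hag HR) as ER.
  pose proof (prods_eq P1 P2 (scc P2 A) (leftlin (scc P2 A)) H1 H2 Hag HL) as EL.
  destruct ER as [ER1 ER2]. destruct EL as [EL1 EL2].
  split; intros [N1 N2]; split; intro K; [apply N1, ER2 | apply N2, EL2 | apply N1, ER1 | apply N2, EL1]; exact K.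
Qed.

Definition iscM (x : nt * bool) : bool := isc (fst x).

Lemma in_lift (r : list (gsym nt)) y : In (Nt y) (lift r) -> exists v, y = (v, false) /\ In (Nt v) r.
Proof.
  unfold lift. intros H. apply in_map_iff in H. destruct H as [[a|v] [E H]]; [discriminate|].
  injection E as <-. eauto.
Qed.

Lemma ncg_lift r : ncg isc r -> ncg iscM (lift r).
Proof.
  intros H B HB. apply in_lift in HB. destruct HB as [v [-> Hv]]. apply H; auto.
Qed.

Lemma chain_good (g : nt -> Prop) : forall bs src body A X rhs,
  g (fst src) -> g A -> (forall v, In (Nt v) body -> g v) ->
  (forall q, In q bs -> g (fst q) /\ forall v, In (Nt v) (snd q) -> g v) ->
  In (X, rhs) (mn_chain src body bs A) ->
  g (fst X) /\ forall y, In (Nt y) rhs -> g (fst y).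
Proof.
  induction bs as [|[B al] bs IH]; simpl; intros src body A X rhs Hs HA Hb Hq Hin.
  - destruct Hin as [E|[]]. injection E as <- <-. split; auto.
    intros y Hy. apply in_app_or in Hy. destruct Hy as [Hy|[Hy|[]]].
    + apply in_lift in Hy. destruct Hy as [v [-> Hv]]. simpl; auto.
    + injection Hy as <-. simpl; auto.
  - destruct Hin as [E|Hin].
    + injection E as <- <-. split; auto.
      intros y Hy. apply in_app_or in Hy. destruct Hy as [Hy|[Hy|[]]].
      * apply in_lift in Hy. destruct Hy as [v [-> Hv]]. simpl; auto.
      * injection Hy as <-. simpl. exact (proj1 (Hq (B, al) (or_introl eq_refl))).
    + eapply IH; [ | exact HA | | | exact Hin].
      * simpl. exact (proj1 (Hq (B, al) (or_introl eq_refl))).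
      * exact (proj2 (Hq (B, al) (or_introl eq_refl))).
      * intros q Hq'. apply Hq. right; exact Hq'.
Qed.

Definition zz : nt * bool := (Sg None, false).

Lemma mn_shape P : PS P -> forall X rhs, mn P X rhs ->
  (X = zz /\ exists r0, P (Sg None) r0 /\ rhs = lift r0) \/
  (fst X <> Sg None /\ SPg iscM X rhs).
Proof.
  intros HP [v b] rhs H.
  destruct H as [[Hs [Hnl [r [Hr ->]]]]|[[A [r [a0 [bs [Hnl [Hr [Hd Hin]]]]]]]|[Hs [Hnl ->]]]];
    simpl in *.
  - subst b. destruct (HP _ _ Hr) as [[-> _]|[Hne Hsp]].
    + left. split; [reflexivity|]. eauto.
    + right. split; auto. unfold SPg, iscM in *. simpl. destruct (isc v).
      * destruct Hsp as [al [Y [-> [Hn HY]]]]. exists (lift al), (Y, false).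
        unfold lift. rewrite map_app. split; [reflexivity|]. split; auto. apply ncg_lift; auto.
      * apply ncg_lift; auto.
  - assert (EA : isc A = false) by (eapply nl_nc; eauto).
    destruct (HP _ _ Hr) as [[-> _]|[Hne Hsp]]; [discriminate|].
    unfold SPg in Hsp. rewrite EA in Hsp.
    destruct Hd as [Er _]. subst r.
    assert (Hc : forall x, In x (concat (map (fun q : nt * list (gsym nt) => Nt (fst q) :: snd q) bs)) ->
               In x (a0 ++ concat (map (fun q : nt * list (gsym nt) => Nt (fst q) :: snd q) bs)))
      by (intros; apply in_or_app; auto).
    destruct (chain_good (fun v => isc v = false) bs (A, false) a0 A (v, b) rhs) as [G1 G2]; auto.
    + intros w Hw. apply Hsp. apply in_or_app; auto.
    + intros q Hq. split.
      * apply Hsp. apply Hc. apply in_concat. exists (Nt (fst q) :: snd q). split; [apply in_map_iff; exists q; split; auto|left; auto].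
      * intros w Hw. apply Hsp. apply Hc. apply in_concat. exists (Nt (fst q) :: snd q). split; [apply in_map_iff; exists q; split; auto|right; auto].
    + simpl in G1. right. split; [intro E; subst; discriminate|].
      unfold SPg, iscM. simpl. rewrite G1. intros y Hy. apply G2; auto.
  - assert (Ev : isc v = false) by (eapply nl_nc; eauto).
    right. split; [intro E; subst; discriminate|]. unfold SPg, iscM. simpl. rewrite Ev.
    intros y [].
Qed.

Lemma mn_eq P1 P2 : PS P1 -> PS P2 -> (forall A r, A <> Sg None -> (P1 A r <-> P2 A r)) ->
  forall X rhs, X <> zz -> mn P1 X rhs -> mn P2 X rhs.
Proof.
  intros H1 H2 Hag X rhs Hz H.
  assert (HX : fst X <> Sg None) by (destruct (mn_shape P1 H1 X rhs H) as [[E _]|[E _]]; tauto).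
  destruct H as [[Hs [Hnl [r [Hr ->]]]]|[[A [r [a0 [bs [Hnl [Hr [Hd Hin]]]]]]]|[Hs [Hnl ->]]]].
  - left. split; auto. split.
    + rewrite <- (nl_eq P1 P2 _ H1 H2 Hag). auto.
    + exists r. split; auto. apply Hag; auto.
  - right; left. exists A, r, a0, bs.
    assert (EA : isc A = false) by exact (nl_nc P1 A H1 Hnl).
    split; [apply (nl_eq P1 P2 _ H1 H2 Hag); auto|].
    split; [apply Hag; auto; intro E; subst; discriminate|].
    rewrite <- (scc_eq P1 P2 H1 H2 Hag). auto.
  - right; right. split; auto. split; auto. apply (nl_eq P1 P2 _ H1 H2 Hag); auto.
Qed.


Lemma derives_nil_inv {V : Type} (M : V -> list (gsym V) -> Prop) w : derives M [] w -> w = [].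
Proof. intros H. inversion H; auto. Qed.

Lemma derives_mapTm {V : Type} (M : V -> list (gsym V) -> Prop) : forall s w,
  derives M (map Tm s) w -> w = s.
Proof.
  induction s as [|a s IH]; simpl; intros w H; inversion H; subst; auto. f_equal; auto.
Qed.

Lemma derives_mapTm' {V : Type} (M : V -> list (gsym V) -> Prop) : forall s,
  derives M (map Tm s) s.
Proof. induction s; simpl; constructor; auto. Qed.

Lemma der_transfer {V : Type} (M1 M2 : V -> list (gsym V) -> Prop) (c : V -> bool) (z : V)
  (s1 s2 : list Sig)
  (H1 : forall X r, X <> z -> M1 X r -> M2 X r)
  (H2 : forall r, M1 z r -> r = map Tm s1)
  (H2' : M2 z (map Tm s2))
  (H3 : forall X r, X <> z -> M1 X r -> SPg c X r)
  (Hz : c z = true) :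
  forall xs w, derives M1 xs w ->
  (ncg c xs -> derives M2 xs w) /\
  (forall al Y, xs = al ++ [Nt Y] -> ncg c al -> c Y = true ->
     exists k, w = k ++ s1 /\ derives M2 xs (k ++ s2)).
Proof.
  induction 1 as [|a r w Hd [IH1 IH2]|A rhs r w1 w2 HM Hd1 [IA1 IA2] Hd2 [IR1 IR2]].
  - split; [intros; constructor|]. intros al Y E. destruct al; discriminate.
  - split.
    + intros Hn. constructor. apply IH1. intros B HB; apply Hn; simpl; right; auto.
    + intros al Y E Hn HY. destruct al as [|x al]; simpl in E; [discriminate|].
      injection E as E1 E. subst x.
      destruct (IH2 al Y E) as [k [-> Hk]]; auto.
      * intros B HB. apply Hn. right; auto.
      * exists (a :: k). split; [reflexivity| constructor; auto].
  - split.
    + intros Hn. assert (cA : c A = false) by (apply Hn; left; auto).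
      assert (Az : A <> z) by (intro; subst; congruence).
      apply der_nt with rhs; [apply H1; auto| |].
      * apply IA1. specialize (H3 A rhs Az HM). unfold SPg in H3. rewrite cA in H3. auto.
      * apply IR1. intros B HB. apply Hn. right; auto.
    + intros al Y E Hn HY. destruct al as [|x al].
      * simpl in E. injection E as E1 E2. subst A r.
        apply derives_nil_inv in Hd2. subst w2.
        destruct (classic (Y = z)) as [->|HYz].
        -- apply H2 in HM. subst rhs. apply derives_mapTm in Hd1. subst w1.
           exists []. split; [rewrite app_nil_r; reflexivity|]. simpl.
           rewrite <- (app_nil_r s2). apply der_nt with (map Tm s2); [auto| apply derives_mapTm' | constructor].
        -- specialize (H3 Y rhs HYz HM). unfold SPg in H3. rewrite HY in H3.
           destruct H3 as [al' [Y' [Er [Hn' HY']]]].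
           destruct (IA2 al' Y' Er Hn' HY') as [k1 [-> Hk1]].
           exists k1. split; [rewrite app_nil_r; reflexivity|].
           rewrite <- (app_nil_r (k1 ++ s2)). apply der_nt with rhs; [apply H1; auto|auto|constructor].
      * simpl in E. injection E as E1 E. subst x.
        assert (cA : c A = false) by (apply Hn; left; auto).
        assert (Az : A <> z) by (intro; subst; congruence).
        destruct (IR2 al Y E) as [k2 [-> Hk2]]; auto.
        { intros B HB. apply Hn. right; auto. }
        exists (w1 ++ k2). split; [rewrite app_assoc; reflexivity|].
        rewrite <- app_assoc. apply der_nt with rhs; [apply H1; auto| |auto].
        apply IA1. specialize (H3 A rhs Az HM). unfold SPg in H3. rewrite cA in H3. auto.
Qed.

Lemma lift_mapTm s : @lift nt (map Tm s) = map Tm s.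
Proof. unfold lift. rewrite map_map. reflexivity. Qed.

Lemma LM_shift p s1 s2 pi w : LM p [s1] pi w -> exists k, w = k ++ s1 /\ LM p [s2] pi (k ++ s2).
Proof.
  intros H. unfold LM, lang in *.
  assert (HP1 := G_PS p [s1]). assert (HP2 := G_PS p [s2]).
  assert (Hag : forall A r, A <> Sg None -> (G p [s1] A r <-> G p [s2] A r))
    by (intros; apply G_agree; auto).
  destruct (der_transfer (mn (G p [s1])) (mn (G p [s2])) iscM zz s1 s2) with
    (xs := [Nt (Dc pi, false)]) (w := w) as [_ D]; auto.
  - intros X r Hz Hm. exact (mn_eq _ _ HP1 HP2 Hag X r Hz Hm).
  - intros r Hm. destruct (mn_shape _ HP1 _ _ Hm) as [[_ [r0 [Hr0 ->]]]|[E _]]; [|simpl in E; congruence].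
    apply G_split in Hr0. destruct Hr0 as [Hr0|[_ [s [[<-|[]] ->]]]].
    + apply G0_SP in Hr0. destruct Hr0; congruence.
    + apply lift_mapTm.
  - left. split; [reflexivity|]. split.
    + intros Hnl. apply nl_nc in Hnl; auto. discriminate.
    + exists (map Tm s2). split; [|symmetry; apply lift_mapTm].
      apply G_split. right. split; auto. exists s2. split; [left|]; auto.
  - intros X r Hz Hm. destruct (mn_shape _ HP1 _ _ Hm) as [[E _]|[_ Hs]]; [congruence|auto].
  - apply (D [] (Dc pi, false)); auto. intros B [].
Qed.

Lemma LM_eps p sigma pi w : LM p [sigma] pi w <-> exists k, LM p [[]] pi k /\ w = k ++ sigma.
Proof.
  split.
  - intros H. destruct (LM_shift p sigma [] pi w H) as [k [-> Hk]].
    rewrite app_nil_r in Hk. eauto.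
  - intros [k [Hk ->]]. destruct (LM_shift p [] sigma pi k Hk) as [k' [-> Hk']].
    rewrite app_nil_r. auto.
Qed.

Theorem mainTheorem3 (p : program) (pi : label) :
  wf_program p -> In pi (prog_labels p) ->
  forall s : list bool,
    (exists a, simpL (LM p [map emb s] pi) a) <->
    (exists t u : list bool, s = t ++ u /\ Lcomp p pi t).
Proof.
  intros _ _ s. unfold simpL, Lcomp, LA. split.
  - intros [a [w [Hw Ha]]]. apply LM_eps in Hw. destruct Hw as [k [Hk ->]].
    apply simp_canon in Ha. destruct Ha as [c [Hc Ha]].
    destruct (canon_form _ _ Hc) as [u [q [-> [Hu Hq]]]].
    rewrite <- app_assoc in Ha.
    assert (Ha' : exists a, simp (u ++ q ++ map emb s) a) by eauto.
    apply simp_plain in Ha'; auto. apply simp_bars_emb in Ha'; auto.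
    destruct Ha' as [t [u' [-> Ht]]]. exists t, u'. split; auto.
    exists q, u. split; auto. split; auto. split; eauto.
  - intros [t [u' [-> [q [u [Hq [Hu [[k [Hk Hc]] Ht]]]]]]]].
    assert (Hs : exists a, simp (q ++ map emb (t ++ u')) a) by (apply simp_bars_emb; eauto).
    apply (simp_plain u) in Hs; auto. destruct Hs as [a Ha].
    exists a, (k ++ map emb (t ++ u')). split.
    + apply LM_eps. eauto.
    + apply simp_canon. exists (u ++ q). split; auto. rewrite <- app_assoc. auto.
Qed.
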